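(* Let $S$ be a completely $0$-simple semigroup with finitely many left ideals and finitely many right ideals. If every maximal subgroup of $S$ is defined by a finite complete rewriting system, then $S$ is also defined by a finite complete rewriting system.
   Context: A semigroup $S$ with zero is completely $0$-simple if it is $0$-simple (i.e. $S^2\neq\{0\}$ and its only ideals are $\{0\}$ and $S$) and has $0$-minimal left and right ideals. A rewriting system $\langle X\mid R\rangle$ consists of an alphabet $X$ and rules $u\to v$ with $u,v\in X^+$; it is finite if $X,R$ are finite. One-step reduction: $w_1uw_2\to_R w_1vw_2$ for $(u\to v)\in R$; $\to_R^*$ is its reflexive transitive closure. It is noetherian if there is no infinite chain $w_1\to_R w_2\to_R\cdots$, confluent if $u\to_R^*v$, $u\to_R^*v'$ imply a common $w$ with $v\to_R^*w$, $v'\to_R^*w$, and complete if both. A semigroup (or group) is defined by $\langle X\mid R\rangle$ if it is isomorphic to $X^+$ modulo the congruence generated by $R$. *)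

(* Defs.v *)
From mathcomp Require Import all_boot.
From Stdlib Require Import Relations.
From Stdlib Require List.
Set Implicit Arguments. Unset Strict Implicit. Unset Printing Implicit Defensive.

Definition associative_op {S : Type} (mul : S -> S -> S) :=
  forall x y w, mul x (mul y w) = mul (mul x y) w.

Definition is_zero {S : Type} (mul : S -> S -> S) (z : S) :=
  forall x, mul z x = z /\ mul x z = z.

Definition set_eq {S : Type} (A B : S -> Prop) := forall x, A x <-> B x.
Definition set_sub {S : Type} (A B : S -> Prop) := forall x, A x -> B x.

Definition is_left_ideal {S : Type} (mul : S -> S -> S) (L : S -> Prop) :=
  (exists x, L x) /\ forall s x, L x -> L (mul s x).
Definition is_right_ideal {S : Type} (mul : S -> S -> S) (R : S -> Prop) :=
  (exists x, R x) /\ forall s x, R x -> R (mul x s).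
Definition is_ideal {S : Type} (mul : S -> S -> S) (I : S -> Prop) :=
  is_left_ideal mul I /\ is_right_ideal mul I.

Definition zero_set {S : Type} (z : S) : S -> Prop := fun x => x = z.
Definition full_set {S : Type} : S -> Prop := fun _ => True.

Definition zero_simple {S : Type} (mul : S -> S -> S) (z : S) :=
  (exists x y, mul x y <> z) /\
  forall I, is_ideal mul I -> set_eq I (zero_set z) \/ set_eq I full_set.

Definition zero_minimal_left_ideal {S : Type} (mul : S -> S -> S) (z : S) L :=
  is_left_ideal mul L /\ ~ set_eq L (zero_set z) /\
  forall L', is_left_ideal mul L' -> set_sub L' L ->
    set_eq L' (zero_set z) \/ set_eq L' L.
Definition zero_minimal_right_ideal {S : Type} (mul : S -> S -> S) (z : S) R :=
  is_right_ideal mul R /\ ~ set_eq R (zero_set z) /\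
  forall R', is_right_ideal mul R' -> set_sub R' R ->
    set_eq R' (zero_set z) \/ set_eq R' R.

Definition completely_zero_simple {S : Type} (mul : S -> S -> S) (z : S) :=
  zero_simple mul z /\
  (exists L, zero_minimal_left_ideal mul z L) /\
  (exists R, zero_minimal_right_ideal mul z R).

Definition finitely_many_left_ideals {S : Type} (mul : S -> S -> S) :=
  exists Ls : list (S -> Prop),
    forall L, is_left_ideal mul L -> exists L', List.In L' Ls /\ set_eq L L'.
Definition finitely_many_right_ideals {S : Type} (mul : S -> S -> S) :=
  exists Rs : list (S -> Prop),
    forall R, is_right_ideal mul R -> exists R', List.In R' Rs /\ set_eq R R'.

Definition is_subgroup {S : Type} (mul : S -> S -> S) (H : S -> Prop) :=
  exists e, H e /\
    (forall x y, H x -> H y -> H (mul x y)) /\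
    (forall x, H x -> mul e x = x /\ mul x e = x) /\
    (forall x, H x -> exists y, H y /\ mul x y = e /\ mul y x = e).

Definition is_maximal_subgroup {S : Type} (mul : S -> S -> S) (H : S -> Prop) :=
  is_subgroup mul H /\
  forall K, is_subgroup mul K -> set_sub H K -> set_sub K H.

Definition rules (X : finType) := seq (seq X * seq X).

Definition rules_ok (X : finType) (R : rules X) :=
  forall r, r \in R -> (0 < size r.1) && (0 < size r.2).

Definition rstep (X : finType) (R : rules X) (a b : seq X) :=
  exists w1 w2 u v, (u, v) \in R /\ a = w1 ++ u ++ w2 /\ b = w1 ++ v ++ w2.

Definition rsteps (X : finType) (R : rules X) := clos_refl_trans _ (rstep R).

Definition noetherian (X : finType) (R : rules X) :=
  ~ exists f : nat -> seq X, forall n, rstep R (f n) (f n.+1).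

Definition confluent (X : finType) (R : rules X) :=
  forall u v v', rsteps R u v -> rsteps R u v' ->
    exists w, rsteps R v w /\ rsteps R v' w.

Definition complete (X : finType) (R : rules X) := noetherian R /\ confluent R.

Definition rcong (X : finType) (R : rules X) := clos_refl_sym_trans _ (rstep R).

Definition eval_word {S : Type} (mul : S -> S -> S) (X : Type) (f : X -> S)
  (x : X) (w : seq X) : S := foldl (fun a y => mul a (f y)) (f x) w.

(* The subsemigroup H of S (given as a subset, H = full_set for S itself)
   is defined by <X | R>: the homomorphism X^+ -> S induced by f maps onto H
   and its kernel is exactly the congruence generated by R, i.e. H is
   isomorphic to X^+ / R^#. *)
Definition defined_by {S : Type} (mul : S -> S -> S) (H : S -> Prop)
  (X : finType) (R : rules X) :=
  exists f : X -> S,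
    (forall x w, H (eval_word mul f x w)) /\
    (forall s, H s -> exists x w, eval_word mul f x w = s) /\
    (forall x w y w', eval_word mul f x w = eval_word mul f y w' <->
                      rcong R (x :: w) (y :: w')).

Definition fcrs_defined {S : Type} (mul : S -> S -> S) (H : S -> Prop) :=
  exists (X : finType) (R : rules X),
    rules_ok R /\ complete R /\ defined_by mul H R.

(* Main.v *)
Require Import Defs.
From mathcomp Require Import all_boot.
From Stdlib Require Import Relations.
From Stdlib Require Import Classical ClassicalEpsilon FunctionalExtensionality PropExtensionality.
From Stdlib Require List.
From mathcomp Require Import zify.
From Stdlib Require Import Lia.
Set Implicit Arguments. Unset Strict Implicit. Unset Printing Implicit Defensive.

Module M1.

Section Gen.
Variable T : Type.
Variable R : T -> T -> Prop.
Definition irred x := forall y, ~ R x y.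
Definition Rf := fun y x => R x y.

Lemma acc_noeth : (forall x, Acc Rf x) -> ~ exists f : nat -> T, forall n, R (f n) (f n.+1).
Proof.
move=> H [f Hf].
have : forall x, Acc Rf x -> forall g : nat -> T, g 0 = x -> (forall n, R (g n) (g n.+1)) -> False.
  move=> x; elim=> {}x _ IH g g0 Hg.
  apply: (IH (g 1) _ (fun n => g n.+1)) => //.
  by rewrite -g0; exact: Hg.
by apply; [exact: (H (f 0)) | | exact: Hf].
Qed.

Lemma noeth_acc : (~ exists f : nat -> T, forall n, R (f n) (f n.+1)) -> forall x, Acc Rf x.
Proof.
move=> H x; apply: NNPP => Hx; apply: H.
pose P y := ~ Acc Rf y.
have step : forall y, P y -> exists y', R y y' /\ P y'.
  move=> y Py; apply: NNPP => Hn; apply: Py; constructor=> y' Ry'.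
  apply: NNPP => Hy'; apply: Hn; by exists y'.
pose next y := epsilon (inhabits y) (fun y' => R y y' /\ P y').
pose f n := iter n next x.
have HP : forall n, P (f n).
  elim=> [|n IH] //.
  exact: (epsilon_spec (inhabits (f n)) _ (step _ IH)).2.
exists f => n.
exact: (epsilon_spec (inhabits (f n)) _ (step _ (HP n))).1.
Qed.

Lemma acc_nf x : Acc Rf x -> exists y, clos_refl_trans _ R x y /\ irred y.
Proof.
elim=> {}x _ IH.
case: (classic (exists y, R x y)) => [[y Hy]|Hn].
  have [w [Hw Iw]] := IH y Hy. exists w; split=>//.
  exact: rt_trans (rt_step _ _ _ _ Hy) Hw.
exists x; split; [exact: rt_refl| move=> y Hy; apply: Hn; by exists y].
Qed.

Lemma irred_rt x y : irred x -> clos_refl_trans _ R x y -> y = x.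
Proof.
move=> Ix /clos_rt_rt1n_iff H; case: H => // y0 z0 H0; by case: (Ix y0).
Qed.

Lemma cr_lemma : (forall u v v', clos_refl_trans _ R u v -> clos_refl_trans _ R u v' ->
    exists w, clos_refl_trans _ R v w /\ clos_refl_trans _ R v' w) ->
  forall a b, clos_refl_sym_trans _ R a b -> exists c, clos_refl_trans _ R a c /\ clos_refl_trans _ R b c.
Proof.
move=> Hc a b; elim=> {a b}.
- move=> a b H; exists b; split; [exact: rt_step | exact: rt_refl].
- move=> a; exists a; split; exact: rt_refl.
- by move=> a b _ [c [H1 H2]]; exists c.
- move=> a b c _ [d [H1 H2]] _ [d' [H3 H4]].
  have [w [H5 H6]] := Hc _ _ _ H2 H3.
  exists w; split; [exact: rt_trans H1 H5 | exact: rt_trans H4 H6].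
Qed.

Lemma rt_rst a b : clos_refl_trans _ R a b -> clos_refl_sym_trans _ R a b.
Proof.
elim=> {a b}; [move=> a b H; exact: rst_step | move=> a; exact: rst_refl|].
move=> a b c _ H1 _ H2; exact: rst_trans H1 H2.
Qed.
End Gen.

Section Ev.
Variable S : Type.
Variable mul : S -> S -> S.
Hypothesis Hassoc : associative_op mul.
Variable T : Type.
Variable f : T -> S.

Definition evalo (w : seq T) : option S :=
  match w with [::] => None | x :: w' => Some (eval_word mul f x w') end.

Lemma foldl_mul w a b : foldl (fun s y => mul s (f y)) (mul a b) w = mul a (foldl (fun s y => mul s (f y)) b w).
Proof. elim: w b => //= y w IH b; by rewrite -Hassoc IH. Qed.

Lemma evalo_cat w1 w2 a b : evalo w1 = Some a -> evalo w2 = Some b -> evalo (w1 ++ w2) = Some (mul a b).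
Proof.
case: w1 => // x w1 [<-]; case: w2 => // y w2 [<-] /=.
rewrite /eval_word foldl_cat /=; by rewrite foldl_mul.
Qed.

Lemma evalo_nil w : (evalo w = None) <-> w = [::].
Proof. by case: w. Qed.

Lemma evalo_catl w1 u s : evalo u = Some s ->
  evalo (w1 ++ u) = Some (oapp (fun a => mul a s) s (evalo w1)).
Proof.
case: w1 => [|y w1] Hu; first by rewrite /= Hu.
by rewrite (evalo_cat (w1:=y::w1) (a:=eval_word mul f y w1) erefl Hu).
Qed.

Lemma evalo_catr u w2 s : evalo u = Some s ->
  evalo (u ++ w2) = Some (oapp (fun b => mul s b) s (evalo w2)).
Proof.
case: w2 => [|y w2] Hu; first by rewrite cats0 Hu.
by rewrite (evalo_cat (w2:=y::w2) (b:=eval_word mul f y w2) Hu erefl).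
Qed.

Lemma evalo_ctx w1 w2 u v : u <> [::] -> evalo u = evalo v -> evalo (w1 ++ u ++ w2) = evalo (w1 ++ v ++ w2).
Proof.
case: u => // x u _ Huv.
case E: (evalo v) Huv => [s|] // Hs.
by rewrite (evalo_catl _ (evalo_catr _ Hs)) (evalo_catl _ (evalo_catr _ E)).
Qed.
End Ev.

End M1.
Import M1.

Module M2.

Section SL.
Variable S : Type.
Variable mul : S -> S -> S.
Variable z : S.
Hypothesis Hassoc : associative_op mul.
Hypothesis Hzero : is_zero mul z.
Hypothesis Hnt : exists x y, mul x y <> z.
Hypothesis Hid : forall I, is_ideal mul I -> set_eq I (zero_set z) \/ set_eq I full_set.
Variable L0 : S -> Prop.
Hypothesis HL0 : zero_minimal_left_ideal mul z L0.
Local Infix "⋆" := mul (at level 40, left associativity).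

Lemma zl x : z ⋆ x = z. Proof. exact: (Hzero x).1. Qed.
Lemma zr x : x ⋆ z = z. Proof. exact: (Hzero x).2. Qed.

Lemma ideal_full I : is_ideal mul I -> (exists a, I a /\ a <> z) -> forall x, I x.
Proof.
move=> HI [a [Ia az]] x; case: (Hid HI) => H; last by apply/H.
by case: az; apply/H.
Qed.

Lemma sq x : exists a b, x = a ⋆ b.
Proof.
have [a [b Hab]] := Hnt.
apply: (ideal_full (I := fun x => exists a b, x = a ⋆ b)); last by exists (a ⋆ b); split => //; exists a, b.
split; (split; first by exists (a ⋆ b), a, b); move=> s y [c [d ->]].
- by exists (s ⋆ c), d; rewrite Hassoc.
- by exists c, (d ⋆ s); rewrite Hassoc.
Qed.

Lemma Jlem a : a <> z -> forall x, x = a \/ (exists t, x = t ⋆ a) \/ (exists u, x = a ⋆ u) \/ (exists t u, x = t ⋆ a ⋆ u).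
Proof.
move=> az.
apply: (ideal_full (I := fun x => x = a \/ (exists t, x = t ⋆ a) \/ (exists u, x = a ⋆ u) \/ (exists t u, x = t ⋆ a ⋆ u))); last by exists a; split => //; left.
split; (split; first by exists a; left); move=> s y.
- case=> [->|[[t ->]|[[u ->]|[t [u ->]]]]].
  + by right; left; exists s.
  + by right; left; exists (s ⋆ t); rewrite Hassoc.
  + by right; right; right; exists s, u; rewrite Hassoc.
  + by right; right; right; exists (s ⋆ t), u; rewrite !Hassoc.
- case=> [->|[[t ->]|[[u ->]|[t [u ->]]]]].
  + by right; right; left; exists s.
  + by right; right; right; exists t, s.
  + by right; right; left; exists (u ⋆ s); rewrite Hassoc.
  + by right; right; right; exists t, (u ⋆ s); rewrite !Hassoc.
Qed.

Lemma SaS a : a <> z -> forall x, exists t u, x = t ⋆ a ⋆ u.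
Proof.
move=> az x.
have [x1 [y ->]] := sq x; have [x2 [x3 ->]] := sq y.
case: (Jlem az x2) => [->|[[t ->]|[[u ->]|[t [u ->]]]]].
- by exists x1, x3; rewrite Hassoc.
- by exists (x1 ⋆ t), x3; rewrite !Hassoc.
- by exists x1, (u ⋆ x3); rewrite !Hassoc.
- by exists (x1 ⋆ t), (u ⋆ x3); rewrite !Hassoc.
Qed.

Lemma aSa a : a <> z -> exists t, a ⋆ t ⋆ a <> z.
Proof.
move=> az; apply: NNPP => H.
have H' : forall t, a ⋆ t ⋆ a = z by move=> t; apply: NNPP => Ht; apply: H; exists t.
have [x [y Hxy]] := Hnt; apply: Hxy.
have [t1 [u1 ->]] := SaS az x; have [t2 [u2 ->]] := SaS az y.
have -> : t1 ⋆ a ⋆ u1 ⋆ (t2 ⋆ a ⋆ u2) = t1 ⋆ (a ⋆ (u1 ⋆ t2) ⋆ a) ⋆ u2 by rewrite !Hassoc.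
by rewrite H' zr zl.
Qed.

Lemma L0nz : exists l, L0 l /\ l <> z.
Proof.
case: HL0 => [[[x Lx] Hc] [Hn _]]; apply: NNPP => H; apply: Hn => y; split.
- move=> Ly; apply: NNPP => yz; apply: H; by exists y.
- move=> ->; rewrite -(zl x); exact: Hc.
Qed.

Lemma L0l l : L0 l -> l <> z -> forall y, L0 y -> exists v, y = v ⋆ l.
Proof.
move=> Ll lz y Ly.
case: HL0 => [[_ Hc] [_ Hm]].
have HI : is_left_ideal mul (fun x => exists t, x = t ⋆ l).
  split; first by exists (l ⋆ l), l.
  by move=> s x [t ->]; exists (s ⋆ t); rewrite Hassoc.
have Hs : set_sub (fun x => exists t, x = t ⋆ l) L0 by move=> x [t ->]; exact: Hc.
case: (Hm _ HI Hs) => H.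
  have [t Ht] := aSa lz; case: Ht; apply/H; by exists (l ⋆ t).
by apply/H.
Qed.

Lemma decompL0 a : a <> z -> exists l, L0 l /\ l <> z /\ (a = l \/ exists u, a = l ⋆ u).
Proof.
move=> az; have [l1 [L1 l1z]] := L0nz; case: HL0 => [[_ Hc] _].
case: (Jlem l1z a) => [E|[[t E]|[[u E]|[t [u E]]]]]; subst a.
- by exists l1; split => //; split => //; left.
- exists (t ⋆ l1); split; first exact: Hc; split => //; by left.
- exists l1; split => //; split => //; right; by exists u.
- exists (t ⋆ l1); split; first exact: Hc; split; last by right; exists u.
  by move=> E; apply: az; rewrite E zl.
Qed.

Lemma P2L a b t : a <> z -> b = t ⋆ a -> b <> z -> exists v, a = v ⋆ b.
Proof.
move=> az Hb bz; case: HL0 => [[_ Hc] _].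
have [l [Ll [lz [E|[u E]]]]] := decompL0 az.
- subst a; apply: (L0l (l := b)) => //; subst b; exact: Hc.
- have tlz : t ⋆ l <> z by move=> E'; apply: bz; rewrite Hb E Hassoc E' zl.
  have [v Hv] := L0l (Hc t l Ll) tlz Ll.
  by exists v; rewrite Hb E {1}Hv !Hassoc.
Qed.

Lemma P1L a : a <> z -> exists t, a = t ⋆ a.
Proof.
move=> az; have [t Ht] := aSa az.
have [v Hv] := P2L (t := a ⋆ t) az erefl Ht.
by exists (v ⋆ a ⋆ t); rewrite {1}Hv !Hassoc.
Qed.
End SL.

End M2.
Import M2.

Module M3.

Definition asb (P : Prop) : bool := if excluded_middle_informative P then true else false.
Lemma asbP (P : Prop) : asb P = true <-> P.
Proof. rewrite /asb; case: excluded_middle_informative => //. Qed.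

Section Idx.
Variable S : Type.
Definition idx (Ls : list (S -> Prop)) (P : S -> Prop) : nat :=
  epsilon (inhabits 0) (fun n => (n < length Ls)%N /\ set_eq (List.nth n Ls (fun _ => False)) P).

Lemma idx_spec Ls P : (exists L', List.In L' Ls /\ set_eq P L') ->
  (idx Ls P < length Ls)%N /\ set_eq (List.nth (idx Ls P) Ls (fun _ => False)) P.
Proof.
move=> [L' [HL' HP]].
apply: (epsilon_spec (inhabits 0) (fun n => (n < length Ls)%N /\ set_eq (List.nth n Ls (fun _ => False)) P)).
have [n [Hn Hnth]] := List.In_nth Ls L' (fun _ => False) HL'.
exists n; split; first by apply/ltP.
by rewrite Hnth => x; split => H; apply/HP.
Qed.

Lemma idx_ext Ls P P' : set_eq P P' -> idx Ls P = idx Ls P'.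
Proof.
move=> HP; rewrite /idx; f_equal; apply: functional_extensionality => n.
apply: propositional_extensionality; split => [[h1 h2]|[h1 h2]]; split => // x.
- by rewrite h2.
- by rewrite h2 HP.
Qed.
End Idx.

Section Struct.
Variable S : Type.
Variable mul : S -> S -> S.
Variable z : S.
Hypothesis Hassoc : associative_op mul.
Hypothesis Hzero : is_zero mul z.
Hypothesis HS : completely_zero_simple mul z.
Variables Ls Rs : list (S -> Prop).
Hypothesis HLs : forall L, is_left_ideal mul L -> exists L', List.In L' Ls /\ set_eq L L'.
Hypothesis HRs : forall R, is_right_ideal mul R -> exists R', List.In R' Rs /\ set_eq R R'.
Local Infix "⋆" := mul (at level 40, left associativity).

Let mulf := fun x y => mul y x.
Let Hassocf : associative_op mulf.
Proof. move=> x y w; rewrite /mulf; by rewrite Hassoc. Qed.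
Let Hzerof : is_zero mulf z.
Proof. move=> x; rewrite /mulf; by case: (Hzero x). Qed.
Let Hnt : exists x y, mul x y <> z.
Proof. by case: HS => [[]]. Qed.
Let Hntf : exists x y, mulf x y <> z.
Proof. have [x [y H]] := Hnt; by exists y, x. Qed.
Let Hid : forall I, is_ideal mul I -> set_eq I (zero_set z) \/ set_eq I full_set.
Proof. by case: HS => [[]]. Qed.
Let Hidf : forall I, is_ideal mulf I -> set_eq I (zero_set z) \/ set_eq I full_set.
Proof. move=> I [H1 H2]; exact: (Hid (conj H2 H1)). Qed.
Let L0 := epsilon (inhabits (fun _ => False)) (zero_minimal_left_ideal mul z).
Let HL0 : zero_minimal_left_ideal mul z L0.
Proof. apply: (epsilon_spec (inhabits (fun _ => False)) (zero_minimal_left_ideal mul z)); by case: HS => _ []. Qed.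
Let R0 := epsilon (inhabits (fun _ => False)) (zero_minimal_right_ideal mul z).
Let HR0 : zero_minimal_left_ideal mulf z R0.
Proof. apply: (epsilon_spec (inhabits (fun _ => False)) (zero_minimal_right_ideal mul z)); by case: HS => _ [] _. Qed.

Lemma P2R a b t : a <> z -> b = a ⋆ t -> b <> z -> exists v, a = b ⋆ v.
Proof. exact: (P2L Hassocf Hzerof Hntf Hidf HR0). Qed.
Lemma P1R a : a <> z -> exists t, a = a ⋆ t.
Proof. exact: (P1L Hassocf Hzerof Hntf Hidf HR0). Qed.
Lemma P2L' a b t : a <> z -> b = t ⋆ a -> b <> z -> exists v, a = v ⋆ b.
Proof. exact: (P2L Hassoc Hzero Hnt Hid HL0). Qed.
Lemma P1L' a : a <> z -> exists t, a = t ⋆ a.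
Proof. exact: (P1L Hassoc Hzero Hnt Hid HL0). Qed.
Lemma SaS' a : a <> z -> forall x, exists t u, x = t ⋆ a ⋆ u.
Proof. exact: (SaS Hassoc Hnt Hid). Qed.
Lemma aSa' a : a <> z -> exists t, a ⋆ t ⋆ a <> z.
Proof. exact: (aSa Hassoc Hzero Hnt Hid). Qed.
Lemma zl' x : z ⋆ x = z. Proof. exact: (Hzero x).1. Qed.
Lemma zr' x : x ⋆ z = z. Proof. exact: (Hzero x).2. Qed.

Lemma idem_ex : exists e, e ⋆ e = e /\ e <> z.
Proof.
have [a [b ab]] := Hnt.
have az : a <> z by move=> E; apply: ab; rewrite E zl'.
have [t Ht] := aSa' az.
pose x := a ⋆ t.
have [y Hy] := P2L' (t := x) az erefl Ht.
have xxz : x ⋆ x <> z.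
  move=> E; apply: Ht; have -> : a ⋆ t = z.
    have -> : a ⋆ t = y ⋆ (x ⋆ x) by rewrite {1}Hy /x !Hassoc.
    by rewrite E zr'.
  by rewrite zl'.
have xz : x <> z by move=> E; apply: xxz; rewrite E zl'.
have [v Hv] := P2L' (t := x) xz erefl xxz.
have [u Hu] := P2R (t := x) xz erefl xxz.
have E1 : x ⋆ u = v ⋆ x by rewrite {1}Hv -(Hassoc v) -Hu.
exists (x ⋆ u); split.
  have E2 : x ⋆ u ⋆ x = x by rewrite E1 -Hassoc -Hv.
  by rewrite Hassoc E2.
by move=> E; apply: xz; rewrite {1}Hv Hassoc -E1 E zl'.
Qed.

Definition e := epsilon (inhabits z) (fun e => e ⋆ e = e /\ e <> z).
Lemma e_spec : e ⋆ e = e /\ e <> z.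
Proof. exact: (epsilon_spec (inhabits z) (fun e => e ⋆ e = e /\ e <> z) idem_ex). Qed.
Lemma ee : e ⋆ e = e. Proof. by case: e_spec. Qed.
Lemma ez : e <> z. Proof. by case: e_spec. Qed.

Definition G g := g <> z /\ e ⋆ g = g /\ g ⋆ e = g.

Lemma G_linv g : G g -> exists v, e = v ⋆ g.
Proof. move=> [gz [Hl Hr]]; exact: (P2L' (t := g) ez (esym Hr) gz). Qed.
Lemma G_rinv g : G g -> exists v, e = g ⋆ v.
Proof. move=> [gz [Hl Hr]]; exact: (P2R (t := g) ez (esym Hl) gz). Qed.

Lemma Ge : G e. Proof. by split; [exact: ez | rewrite ee]. Qed.

Lemma Gmul g h : G g -> G h -> G (g ⋆ h).
Proof.
move=> Gg Gh; have [v Hv] := G_linv Gg.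
case: Gg => gz [gl gr]; case: Gh => hz [hl hr].
split; last by rewrite Hassoc gl -Hassoc hr.
by move=> E; apply: hz; rewrite -hl Hv -Hassoc E zr'.
Qed.

Lemma Ginv g : G g -> exists h, G h /\ g ⋆ h = e /\ h ⋆ g = e.
Proof.
move=> Gg; have [v Hv] := G_linv Gg; have [w Hw] := G_rinv Gg.
case: Gg => gz [gl gr].
have E1 : e ⋆ v ⋆ e ⋆ g = e by rewrite -(Hassoc _ e) gl -Hassoc -Hv ee.
have E2 : g ⋆ (e ⋆ w ⋆ e) = e by rewrite !Hassoc gr -Hw ee.
have E3 : e ⋆ v ⋆ e = e ⋆ w ⋆ e.
  have -> : e ⋆ v ⋆ e = e ⋆ v ⋆ e ⋆ (g ⋆ (e ⋆ w ⋆ e)) by rewrite E2 -(Hassoc (e ⋆ v) e e) ee.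
  by rewrite Hassoc E1 !Hassoc ee.
exists (e ⋆ v ⋆ e); split; last by split => //; rewrite E3.
rewrite /G; split; first by move=> E; apply: ez; rewrite -E1 E zl'.
split; first by rewrite !Hassoc ee.
by rewrite -(Hassoc (e ⋆ v)) ee.
Qed.

Lemma G_maximal : is_maximal_subgroup mul G.
Proof.
split.
  exists e; split; first exact: Ge; split; first exact: Gmul.
  split; first by move=> x [_ [? ?]].
  move=> x Gx; have [h [Gh [H1 H2]]] := Ginv Gx; by exists h.
move=> K [e' [Ke' [Kc [Kid Kinv]]]] HGK.
have Ke : K e := HGK _ Ge.
have E : e' = e.
  have [y [Ky [H1 H2]]] := Kinv e Ke.
  by rewrite -H1 -{1}ee -Hassoc H1; case: (Kid e Ke).
move=> x Kx; have [H1 H2] := Kid x Kx; rewrite E in H1 H2.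
split; last by [].
move=> xz; subst x; have [y [_ [H3 _]]] := Kinv z Kx.
by apply: ez; rewrite -E -H3 zl'.
Qed.

Definition LS s := fun x => exists t, x = t ⋆ s.
Definition RS s := fun x => exists t, x = s ⋆ t.
Lemma LS_li s : is_left_ideal mul (LS s).
Proof. split; first by exists (s ⋆ s), s. by move=> t x [u ->]; exists (t ⋆ u); rewrite Hassoc. Qed.
Lemma RS_ri s : is_right_ideal mul (RS s).
Proof. split; first by exists (s ⋆ s), s. by move=> t x [u ->]; exists (u ⋆ t); rewrite Hassoc. Qed.
Definition LSi s := idx Ls (LS s).
Definition RSi s := idx Rs (RS s).
Lemma LSi_lt s : (LSi s < length Ls)%N. Proof. exact: (idx_spec (HLs (LS_li s))).1. Qed.
Lemma RSi_lt s : (RSi s < length Rs)%N. Proof. exact: (idx_spec (HRs (RS_ri s))).1. Qed.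
Lemma LSi_eq a b : LSi a = LSi b -> set_eq (LS a) (LS b).
Proof.
move=> H x; have := (idx_spec (HLs (LS_li a))).2 x; have := (idx_spec (HLs (LS_li b))).2 x.
rewrite /LSi in H; rewrite H; move=> -> <-; done.
Qed.
Lemma RSi_eq a b : RSi a = RSi b -> set_eq (RS a) (RS b).
Proof.
move=> H x; have := (idx_spec (HRs (RS_ri a))).2 x; have := (idx_spec (HRs (RS_ri b))).2 x.
rewrite /RSi in H; rewrite H; move=> -> <-; done.
Qed.
Lemma LS_eq a b t : a <> z -> b <> z -> b = t ⋆ a -> set_eq (LS a) (LS b).
Proof.
move=> az bz Hb; have [v Hv] := P2L' az Hb bz => x; split => [[u ->]|[u ->]].
- by exists (u ⋆ v); rewrite {1}Hv Hassoc.
- by exists (u ⋆ t); rewrite Hb Hassoc.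
Qed.
Lemma RS_eq a b t : a <> z -> b <> z -> b = a ⋆ t -> set_eq (RS a) (RS b).
Proof.
move=> az bz Hb; have [v Hv] := P2R az Hb bz => x; split => [[u ->]|[u ->]].
- by exists (v ⋆ u); rewrite {1}Hv Hassoc.
- by exists (t ⋆ u); rewrite Hb Hassoc.
Qed.

Lemma SeNZ s : s <> z -> exists t, s ⋆ t ⋆ e <> z.
Proof.
move=> sz; apply: NNPP => H.
have [t1 [u1 Hu]] := SaS' sz e.
apply: ez; rewrite -ee {1}Hu -!Hassoc.
have -> : s ⋆ (u1 ⋆ e) = z by rewrite Hassoc; apply: NNPP => H'; apply: H; exists u1.
by rewrite zr'.
Qed.
Lemma eSNZ s : s <> z -> exists t, e ⋆ t ⋆ s <> z.
Proof.
move=> sz; apply: NNPP => H.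
have [t1 [u1 Hu]] := SaS' sz e.
apply: ez; rewrite -ee {2}Hu !Hassoc.
have -> : e ⋆ t1 ⋆ s = z by apply: NNPP => H'; apply: H; exists t1.
by rewrite zl'.
Qed.

Definition isRk (k : 'I_(length Rs)) := asb (exists s, s <> z /\ RSi s = val k /\ RSi s <> RSi e).
Definition isQk (k : 'I_(length Ls)) := asb (exists s, s <> z /\ LSi s = val k /\ LSi s <> LSi e).
Definition II := {k : 'I_(length Rs) | isRk k}.
Definition LL := {k : 'I_(length Ls) | isQk k}.

Definition rr (k : II) := epsilon (inhabits z) (fun x => x <> z /\ RSi x = val (val k) /\ x ⋆ e = x).
Definition qq (k : LL) := epsilon (inhabits z) (fun x => x <> z /\ LSi x = val (val k) /\ e ⋆ x = x).

Lemma rr_spec k : rr k <> z /\ RSi (rr k) = val (val k) /\ rr k ⋆ e = rr k.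
Proof.
apply: (epsilon_spec (inhabits z) (fun x => x <> z /\ RSi x = val (val k) /\ x ⋆ e = x)).
have /asbP [s [sz [Hs _]]] := valP k.
have [t Ht] := SeNZ sz.
exists (s ⋆ t ⋆ e); split => //; split; last by rewrite -Hassoc ee.
rewrite -Hs; apply: esym; apply: idx_ext; apply: (RS_eq (t := t ⋆ e)) => //.
Qed.
Lemma qq_spec k : qq k <> z /\ LSi (qq k) = val (val k) /\ e ⋆ qq k = qq k.
Proof.
apply: (epsilon_spec (inhabits z) (fun x => x <> z /\ LSi x = val (val k) /\ e ⋆ x = x)).
have /asbP [s [sz [Hs _]]] := valP k.
have [t Ht] := eSNZ sz.
exists (e ⋆ t ⋆ s); split => //; split; last by rewrite !Hassoc ee.
rewrite -Hs; apply: esym; apply: idx_ext; apply: (LS_eq (t := e ⋆ t)) => //.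
Qed.

Definition r' (oi : option II) := if oi is Some k then rr k else e.
Definition q' (ol : option LL) := if ol is Some k then qq k else e.

Lemma r'I oi : r' oi ⋆ e = r' oi.
Proof. case: oi => [k|] /=; [by case: (rr_spec k) => _ [] | exact: ee]. Qed.
Lemma q'I ol : e ⋆ q' ol = q' ol.
Proof. case: ol => [k|] /=; [by case: (qq_spec k) => _ [] | exact: ee]. Qed.
Lemma r'nz oi : r' oi <> z.
Proof. case: oi => [k|] /=; [by case: (rr_spec k) | exact: ez]. Qed.
Lemma q'nz ol : q' ol <> z.
Proof. case: ol => [k|] /=; [by case: (qq_spec k) | exact: ez]. Qed.
Lemma r'a oi : exists a, a ⋆ r' oi = e.
Proof.
have [v Hv] := P2L' (t := r' oi) ez (esym (@r'I oi)) (@r'nz oi); by exists v.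
Qed.
Lemma q'b ol : exists b, q' ol ⋆ b = e.
Proof.
have [v Hv] := P2R (t := q' ol) ez (esym (@q'I ol)) (@q'nz ol); by exists v.
Qed.

Lemma RSi_r' k : RSi (r' (Some k)) = val (val k) /\ val (val k) <> RSi e.
Proof.
split; first by case: (rr_spec k) => _ [].
by have /asbP [s [sz [Hs Hn]]] := valP k; rewrite -Hs.
Qed.
Lemma LSi_q' k : LSi (q' (Some k)) = val (val k) /\ val (val k) <> LSi e.
Proof.
split; first by case: (qq_spec k) => _ [].
by have /asbP [s [sz [Hs Hn]]] := valP k; rewrite -Hs.
Qed.

Lemma rinj oi oj : set_eq (RS (r' oi)) (RS (r' oj)) -> oi = oj.
Proof.
move=> /(idx_ext Rs); rewrite -!/(RSi _).
case: oi => [k|]; case: oj => [k'|] //=.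
- move: (RSi_r' k) (RSi_r' k') => [-> _] [-> _] H.
  by congr Some; apply: val_inj; apply: val_inj.
- by move: (RSi_r' k) => [-> H] E.
- by move: (RSi_r' k') => [-> H] E; case: H.
Qed.
Lemma qinj ol om : set_eq (LS (q' ol)) (LS (q' om)) -> ol = om.
Proof.
move=> /(idx_ext Ls); rewrite -!/(LSi _).
case: ol => [k|]; case: om => [k'|] //=.
- move: (LSi_q' k) (LSi_q' k') => [-> _] [-> _] H.
  by congr Some; apply: val_inj; apply: val_inj.
- by move: (LSi_q' k) => [-> H] E.
- by move: (LSi_q' k') => [-> H] E; case: H.
Qed.

Lemma rcls s : s <> z -> exists oi, set_eq (RS (r' oi)) (RS s).
Proof.
move=> sz; case: (classic (RSi s = RSi e)) => H.
  by exists None; apply: RSi_eq.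
have Hk : isRk (Ordinal (RSi_lt s)) by apply/asbP; exists s.
exists (Some (exist _ (Ordinal (RSi_lt s)) Hk)); apply: RSi_eq.
by rewrite (RSi_r' _).1.
Qed.
Lemma qcls s : s <> z -> exists ol, set_eq (LS (q' ol)) (LS s).
Proof.
move=> sz; case: (classic (LSi s = LSi e)) => H.
  by exists None; apply: LSi_eq.
have Hk : isQk (Ordinal (LSi_lt s)) by apply/asbP; exists s.
exists (Some (exist _ (Ordinal (LSi_lt s)) Hk)); apply: LSi_eq.
by rewrite (LSi_q' _).1.
Qed.

Lemma RS_self s : s <> z -> RS s s.
Proof. move=> sz; have [t Ht] := P1R sz; by exists t. Qed.
Lemma LS_self s : s <> z -> LS s s.
Proof. move=> sz; have [t Ht] := P1L' sz; by exists t. Qed.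

Lemma decomp s : s <> z -> exists oi g ol, G g /\ s = r' oi ⋆ g ⋆ q' ol.
Proof.
move=> sz.
have [oi Hoi] := rcls sz; have [t Ht] := (Hoi s).2 (RS_self sz).
have [ol Hol] := qcls sz; have [t' Ht'] := (Hol s).2 (LS_self sz).
have [a Ha] := r'a oi; have [b Hb] := q'b ol.
have H1 : r' oi ⋆ a ⋆ s = s.
  by rewrite {1}Ht !Hassoc -(Hassoc (r' oi) a) Ha r'I -Ht.
have H2 : s ⋆ b ⋆ q' ol = s.
  by rewrite {1}Ht' -(Hassoc t' (q' ol) b) Hb -Hassoc q'I -Ht'.
exists oi, (e ⋆ a ⋆ s ⋆ b ⋆ e), ol.
have E : r' oi ⋆ (e ⋆ a ⋆ s ⋆ b ⋆ e) ⋆ q' ol = s.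
  by rewrite !Hassoc r'I H1 -(Hassoc (s ⋆ b)) q'I H2.
split; last by rewrite E.
rewrite /G; split.
  by move=> Ez; apply: sz; rewrite -E Ez zr' zl'.
by split; [rewrite !Hassoc ee | rewrite -Hassoc ee].
Qed.

Lemma nf_core oi g ol a b : G g -> a ⋆ r' oi = e -> q' ol ⋆ b = e ->
  a ⋆ (r' oi ⋆ g ⋆ q' ol) ⋆ b = g.
Proof.
move=> [_ [gl gr]] Ha Hb.
by rewrite !Hassoc Ha gl -(Hassoc g) Hb gr.
Qed.

Lemma nonzero oi g ol : G g -> r' oi ⋆ g ⋆ q' ol <> z.
Proof.
move=> Gg E; have [a Ha] := r'a oi; have [b Hb] := q'b ol.
have := nf_core Gg Ha Hb; rewrite E zr' zl' => Ez.
by case: Gg; rewrite Ez.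
Qed.

Lemma uniq_dec oi g ol oj h om : G g -> G h ->
  r' oi ⋆ g ⋆ q' ol = r' oj ⋆ h ⋆ q' om -> oi = oj /\ g = h /\ ol = om.
Proof.
move=> Gg Gh E.
have nz1 : r' oi ⋆ g ⋆ q' ol <> z := nonzero Gg.
have nz2 : r' oj ⋆ h ⋆ q' om <> z := nonzero Gh.
have Hij : oi = oj.
  apply: rinj => x.
  rewrite (RS_eq (b := r' oi ⋆ g ⋆ q' ol) (t := g ⋆ q' ol) (@r'nz oi) nz1); last by rewrite Hassoc.
  rewrite (RS_eq (b := r' oj ⋆ h ⋆ q' om) (t := h ⋆ q' om) (@r'nz oj) nz2); last by rewrite Hassoc.
  by rewrite E.
have Hlm : ol = om.
  apply: qinj => x.
  rewrite (LS_eq (b := r' oi ⋆ g ⋆ q' ol) (t := r' oi ⋆ g) (@q'nz ol) nz1) //.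
  rewrite (LS_eq (b := r' oj ⋆ h ⋆ q' om) (t := r' oj ⋆ h) (@q'nz om) nz2) //.
  by rewrite E.
subst oj om; split => //; split => //.
have [a Ha] := r'a oi; have [b Hb] := q'b ol.
by rewrite -(nf_core Gg Ha Hb) E (nf_core Gh Ha Hb).
Qed.
End Struct.

End M3.
Import M3.

Module M4.

Section RW.
Variable S : Type.
Variable mul : S -> S -> S.
Variable z : S.
Hypothesis Hassoc : associative_op mul.
Hypothesis Hzero : is_zero mul z.
Local Infix "⋆" := mul (at level 40, left associativity).
Variable e : S.
Hypothesis ee : e ⋆ e = e.
Hypothesis ez : e <> z.
Definition Gw g := g <> z /\ e ⋆ g = g /\ g ⋆ e = g.
Variables (I L : finType) (r0 : I -> S) (q0 : L -> S).
Definition rw (oi : option I) := if oi is Some k then r0 k else e.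
Definition qw (ol : option L) := if ol is Some k then q0 k else e.
Hypothesis Gmul : forall g h, Gw g -> Gw h -> Gw (g ⋆ h).
Hypothesis rI : forall i, r0 i ⋆ e = r0 i.
Hypothesis qI : forall l, e ⋆ q0 l = q0 l.
Hypothesis Hdecomp : forall s, s <> z -> exists oi g ol, Gw g /\ s = rw oi ⋆ g ⋆ qw ol.
Hypothesis Hnonzero : forall oi g ol, Gw g -> rw oi ⋆ g ⋆ qw ol <> z.
Hypothesis Huniq : forall oi g ol oj h om, Gw g -> Gw h ->
  rw oi ⋆ g ⋆ qw ol = rw oj ⋆ h ⋆ qw om -> oi = oj /\ g = h /\ ol = om.
Variables (A : finType) (RG : rules A) (fA : A -> S).
Hypothesis okG : rules_ok RG.
Hypothesis cG : complete RG.
Hypothesis dG1 : forall x w, Gw (eval_word mul fA x w).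
Hypothesis dG2 : forall s, Gw s -> exists x w, eval_word mul fA x w = s.
Hypothesis dG3 : forall x w y w', eval_word mul fA x w = eval_word mul fA y w' <-> rcong RG (x :: w) (y :: w').

Lemma zl x : z ⋆ x = z. Proof. exact: (Hzero x).1. Qed.
Lemma zr x : x ⋆ z = z. Proof. exact: (Hzero x).2. Qed.

Definition evA := evalo mul fA.
Definition irrG (u : seq A) := forall u', ~ rstep RG u u'.

Lemma evA_G u s : evA u = Some s -> Gw s.
Proof. case: u => // x w [<-]; exact: dG1. Qed.

Lemma rstep_nonnil (T : finType) (R : rules T) u v : rules_ok R -> rstep R u v -> u <> [::] /\ v <> [::].
Proof.
move=> ok [w1 [w2 [a [b [Hab [-> ->]]]]]]; have /andP [h1 h2] := ok _ Hab; rewrite /= in h1 h2.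
by split => E; have := congr1 size E; rewrite !size_cat /=; lia.
Qed.

Lemma rstepG_ev u v : rstep RG u v -> evA u = evA v.
Proof.
move=> H; have [un vn] := rstep_nonnil okG H.
case: u un H => // x w _; case: v vn => // y w' _ H.
rewrite /evA /=; congr Some; apply/dG3; exact: rst_step.
Qed.

Lemma rtG_ev u v : clos_refl_trans _ (rstep RG) u v -> evA u = evA v.
Proof. elim=> // [a b /rstepG_ev //|a b c _ -> _ ->] //. Qed.

Lemma AccG u : Acc (Rf (rstep RG)) u.
Proof. apply: noeth_acc; by case: cG. Qed.

Definition wd g := epsilon (inhabits [::]) (fun u => u <> [::] /\ irrG u /\ evA u = Some g).

Lemma wd_spec g : Gw g -> wd g <> [::] /\ irrG (wd g) /\ evA (wd g) = Some g.
Proof.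
move=> Gg; apply: (epsilon_spec (inhabits [::]) (fun u => u <> [::] /\ irrG u /\ evA u = Some g)).
have [x [w Hxw]] := dG2 Gg.
have [y [Hy Iy]] := acc_nf (AccG (x :: w)).
have Hv := rtG_ev Hy.
exists y; split; last split => //.
  by move=> E; rewrite E in Hv.
by rewrite -Hv /evA /= Hxw.
Qed.

Lemma uniq_irr u1 u2 : u1 <> [::] -> u2 <> [::] -> irrG u1 -> irrG u2 -> evA u1 = evA u2 -> u1 = u2.
Proof.
case: u1 => // x w _; case: u2 => // y w' _ I1 I2 [E].
have /dG3 H := E.
have [c [H1 H2]] := cr_lemma (proj2 cG) H.
by rewrite -(irred_rt I1 H1) -(irred_rt I2 H2).
Qed.

Definition we := wd e.
Lemma Ge : Gw e. Proof. by split => //; rewrite ee. Qed.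
Lemma we_spec : we <> [::] /\ irrG we /\ evA we = Some e.
Proof. exact: wd_spec Ge. Qed.

Definition X : finType := (A + (I + (L + unit)))%type.
Definition cA (a : A) : X := inl a.
Definition cR (i : I) : X := inr (inl i).
Definition cQ (l : L) : X := inr (inr (inl l)).
Definition cZ : X := inr (inr (inr tt)).
Definition fX (x : X) : S :=
  match x with inl a => fA a | inr (inl i) => r0 i | inr (inr (inl l)) => q0 l | inr (inr (inr _)) => z end.
Definition isA (x : X) := if x is inl _ then true else false.
Definition isRQ (x : X) := match x with inr (inl _) => true | inr (inr (inl _)) => true | _ => false end.
Definition isR (x : X) := match x with inr (inl _) => true | _ => false end.
Definition isQ (x : X) := match x with inr (inr (inl _)) => true | _ => false end.
Definition isZ (x : X) := match x with inr (inr (inr _)) => true | _ => false end.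
Definition evX := evalo mul fX.

Lemma evX_map u : evX (map cA u) = evA u.
Proof.
have aux : forall w s, foldl (fun a y => a ⋆ fX y) s (map cA w) = foldl (fun a y => a ⋆ fA y) s w.
  by elim=> //= y w IH s; rewrite IH.
case: u => //= x w; rewrite /eval_word; congr Some; exact: aux.
Qed.

Lemma evX_cons x w s : evX w = Some s -> evX (x :: w) = Some (fX x ⋆ s).
Proof. move=> H; exact: (evalo_cat Hassoc (w1 := [:: x]) erefl H). Qed.
Lemma evX_rcons w y s : evX w = Some s -> evX (w ++ [:: y]) = Some (s ⋆ fX y).
Proof. move=> H; exact: (evalo_cat Hassoc (w2 := [:: y]) H erefl). Qed.

Definition ew (s : S) : seq X := if asb (s = z) then [:: cZ] else map cA (wd s).

Lemma ew_spec s : s = z \/ Gw s -> evX (ew s) = Some s /\ count isRQ (ew s) = 0 /\ ew s <> [::].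
Proof.
rewrite /ew; case: (boolP (asb (s = z))) => [/asbP -> _ | H [E|Gs]] //.
  by case/negP: H; apply/asbP.
have [h1 [_ h3]] := wd_spec Gs.
rewrite evX_map h3 count_map; split => //; split.
  by apply/eqP; rewrite -leqn0 leqNgt -has_count; apply/hasP => -[].
by case: (wd s) h1.
Qed.

Lemma Gz s : e ⋆ s = s -> s ⋆ e = s -> s = z \/ Gw s.
Proof. move=> h1 h2; case: (classic (s = z)) => H; [by left | by right]. Qed.

Lemma fA_G a : Gw (fA a). Proof. exact: (dG1 a [::]). Qed.

Definition RGl : rules X := [seq (map cA p.1, map cA p.2) | p <- RG].
Definition Zl : rules X := [seq ([:: cZ; x], [:: cZ]) | x <- enum X].
Definition Zr : rules X := [seq ([:: x; cZ], [:: cZ]) | x <- enum X].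
Definition R4r : rules X := [seq (cR i :: map cA we, [:: cR i]) | i <- enum I].
Definition R4q : rules X := [seq (map cA we ++ [:: cQ l], [:: cQ l]) | l <- enum L].
Definition R5 : rules X := [seq ([:: cA p.1; cR p.2], cA p.1 :: ew (e ⋆ r0 p.2)) | p <- enum {: A * I}].
Definition R6 : rules X := [seq ([:: cR p.1; cR p.2], cR p.1 :: ew (e ⋆ r0 p.2)) | p <- enum {: I * I}].
Definition R7 : rules X := [seq ([:: cQ p.1; cR p.2], ew (q0 p.1 ⋆ r0 p.2)) | p <- enum {: L * I}].
Definition R8 : rules X := [seq ([:: cQ p.1; cA p.2], ew (q0 p.1 ⋆ e) ++ [:: cA p.2]) | p <- enum {: L * A}].
Definition R9 : rules X := [seq ([:: cQ p.1; cQ p.2], ew (q0 p.1 ⋆ e) ++ [:: cQ p.2]) | p <- enum {: L * L}].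
Definition RX : rules X := RGl ++ Zl ++ Zr ++ R4r ++ R4q ++ R5 ++ R6 ++ R7 ++ R8 ++ R9.

Lemma in_cat_split (T : eqType) (P : T -> Prop) s1 s2 :
  {in s1, forall x, P x} -> {in s2, forall x, P x} -> {in s1 ++ s2, forall x, P x}.
Proof. move=> H1 H2 x; rewrite mem_cat => /orP [/H1|/H2] //. Qed.

Lemma G_eSe_l s : Gw s -> e ⋆ s = s. Proof. by case=> _ []. Qed.
Lemma G_eSe_r s : Gw s -> s ⋆ e = s. Proof. by case=> _ []. Qed.

Lemma sound : {in RX, forall p, p.1 <> [::] /\ p.2 <> [::] /\ evX p.1 = evX p.2}.
Proof.
have we1 := we_spec.1; have we3 := we_spec.2.2.
have wmap : evX (map cA we) = Some e by rewrite evX_map.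
apply: in_cat_split.
  move=> p /mapP [[u v] Huv ->] /=.
  have /andP [h1 h2] := okG Huv; rewrite /= in h1 h2.
  split; first by case: u h1 {Huv}.
  split; first by case: v h2 {Huv}.
  rewrite !evX_map; apply: rstepG_ev; exists [::], [::], u, v; by rewrite !cats0.
apply: in_cat_split.
  by move=> p /mapP [x _ ->] /=; split => //; split => //; exact: (congr1 Some (zl _)).
apply: in_cat_split.
  by move=> p /mapP [x _ ->] /=; split => //; split => //; exact: (congr1 Some (zr _)).
apply: in_cat_split.
  move=> p /mapP [i _ ->]; split => //; split => //.
  by rewrite (evX_cons _ wmap) rI.
apply: in_cat_split.
  move=> p /mapP [l _ ->]; split; first by case: (we) we1.
  by split => //; rewrite (evX_rcons _ wmap) qI.
apply: in_cat_split.
  move=> p /mapP [[a i] _ ->].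
  have [h1 [_ h3]] := @ew_spec (e ⋆ r0 i) (Gz (s := e ⋆ r0 i) ltac:(by rewrite Hassoc ee) ltac:(by rewrite -Hassoc rI)).
  split => //; split => //; rewrite (evX_cons _ h1) /=.
  by rewrite Hassoc (G_eSe_r (fA_G a)).
apply: in_cat_split.
  move=> p /mapP [[j i] _ ->].
  have [h1 [_ h3]] := @ew_spec (e ⋆ r0 i) (Gz (s := e ⋆ r0 i) ltac:(by rewrite Hassoc ee) ltac:(by rewrite -Hassoc rI)).
  split => //; split => //; rewrite (evX_cons _ h1) /=.
  by rewrite Hassoc rI.
apply: in_cat_split.
  move=> p /mapP [[l i] _ ->].
  have [h1 [_ h3]] := @ew_spec (q0 l ⋆ r0 i) (Gz (s := q0 l ⋆ r0 i) ltac:(by rewrite Hassoc qI) ltac:(by rewrite -Hassoc rI)).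
  by split => //; split => //; rewrite h1.
apply: in_cat_split.
  move=> p /mapP [[l a] _ ->].
  have [h1 [_ h3]] := @ew_spec (q0 l ⋆ e) (Gz (s := q0 l ⋆ e) ltac:(by rewrite Hassoc qI) ltac:(by rewrite -Hassoc ee)).
  split => //; split; first by case: (ew _) h3.
  by rewrite (evX_rcons _ h1) /= -Hassoc (G_eSe_l (fA_G a)).
move=> p /mapP [[l m] _ ->].
have [h1 [_ h3]] := @ew_spec (q0 l ⋆ e) (Gz (s := q0 l ⋆ e) ltac:(by rewrite Hassoc qI) ltac:(by rewrite -Hassoc ee)).
split => //; split; first by case: (ew _) h3.
by rewrite (evX_rcons _ h1) /= -Hassoc qI.
Qed.

Lemma RX_ok : rules_ok RX.
Proof.
move=> p Hp; have [h1 [h2 _]] := sound Hp.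
by apply/andP; split; rewrite lt0n size_eq0; apply/eqP.
Qed.

Lemma rstepX_ev a b : rstep RX a b -> evX a = evX b.
Proof.
move=> [w1 [w2 [u [v [Huv [-> ->]]]]]]; have [h1 [h2 h3]] := sound Huv.
exact: evalo_ctx.
Qed.

Lemma rcongX_ev a b : rcong RX a b -> evX a = evX b.
Proof.
elim=> {a b} [a0 b0 H|a0|a0 b0 _ IH|a0 b0 c0 _ IH1 _ IH2];
  [exact: rstepX_ev H | by [] | by rewrite IH | by rewrite IH1 IH2].
Qed.
Lemma rtX_ev a b : rsteps RX a b -> evX a = evX b.
Proof.
elim=> {a b} [a0 b0 H|a0|a0 b0 c0 _ IH1 _ IH2];
  [exact: rstepX_ev H | by [] | by rewrite IH1 IH2].
Qed.

Definition rq (w : seq X) := count isRQ w.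
Definition Rs (a b : seq X) := exists w1 w2 u v, (u, v) \in RG /\ a = w1 ++ map cA u ++ w2 /\ b = w1 ++ map cA v ++ w2.
Definition Ds (a b : seq X) := exists w1 w2 c d, ~~ isA c /\ d != [::] /\ count isRQ d = 0 /\
  ((a = w1 ++ c :: d ++ w2 /\ b = w1 ++ c :: w2) \/ (a = w1 ++ d ++ c :: w2 /\ b = w1 ++ c :: w2)).

Lemma rq_mapA u : rq (map cA u) = 0.
Proof. by rewrite /rq count_map; elim: u. Qed.

Lemma rule_class : {in RX, forall p,
  (exists u v, (u, v) \in RG /\ p = (map cA u, map cA v)) \/
  (exists c d, ~~ isA c /\ d != [::] /\ count isRQ d = 0 /\ (p = (c :: d, [:: c]) \/ p = (d ++ [:: c], [:: c]))) \/
  rq p.2 < rq p.1}.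
Proof.
have wen := we_spec.1.
have ewrq : forall s, s = z \/ Gw s -> rq (ew s) = 0 by move=> s /ew_spec [_ []].
apply: in_cat_split.
  by move=> p /mapP [[u v] Huv ->]; left; exists u, v.
apply: in_cat_split.
  move=> p /mapP [x _ ->]; case Hx: (isRQ x); [right; right; by rewrite /rq /= Hx|].
  by right; left; exists cZ, [:: x]; split => //; split => //; split; [rewrite /= Hx | left].
apply: in_cat_split.
  move=> p /mapP [x _ ->]; case Hx: (isRQ x); [right; right; by rewrite /rq /= Hx|].
  by right; left; exists cZ, [:: x]; split => //; split => //; split; [rewrite /= Hx | right].
apply: in_cat_split.
  move=> p /mapP [i _ ->]; right; left; exists (cR i), (map cA we); split => //; split.
    by case: (we) wen.
  by split; [exact: rq_mapA | left].
apply: in_cat_split.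
  move=> p /mapP [l _ ->]; right; left; exists (cQ l), (map cA we); split => //; split.
    by case: (we) wen.
  by split; [exact: rq_mapA | right].
apply: in_cat_split.
  move=> p /mapP [[a i] _ ->]; right; right; rewrite /rq /= -/(rq _).
  by rewrite ewrq //; apply: Gz; [rewrite Hassoc ee | rewrite -Hassoc rI].
apply: in_cat_split.
  move=> p /mapP [[j i] _ ->]; right; right; rewrite /rq /= -/(rq _).
  by rewrite ewrq //; apply: Gz; [rewrite Hassoc ee | rewrite -Hassoc rI].
apply: in_cat_split.
  move=> p /mapP [[l i] _ ->]; right; right; rewrite /rq /= -/(rq _).
  by rewrite ewrq //; apply: Gz; [rewrite Hassoc qI | rewrite -Hassoc rI].
apply: in_cat_split.
  move=> p /mapP [[l a] _ ->]; right; right; rewrite /rq /= count_cat -/(rq _).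
  by rewrite ewrq //; apply: Gz; [rewrite Hassoc qI | rewrite -Hassoc ee].
move=> p /mapP [[l m] _ ->]; right; right; rewrite /rq /= count_cat -/(rq _).
by rewrite ewrq //; apply: Gz; [rewrite Hassoc qI | rewrite -Hassoc ee].
Qed.

Lemma classify a b : rstep RX a b -> Rs a b \/ Ds a b \/ rq b < rq a.
Proof.
move=> [w1 [w2 [u [v [Huv [-> ->]]]]]].
case: (rule_class Huv) => [[u' [v' [H E]]]|[[c [d [Hc [Hd [Hr [E|E]]]]]]|Hlt]].
- case: E => -> ->; left; by exists w1, w2, u', v'.
- case: E => -> ->; right; left; exists w1, w2, c, d; do 3 split => //; by left.
- case: E => -> ->; right; left; exists w1, w2, c, d; do 3 split => //; right; by rewrite -!catA.
- right; right; rewrite /rq !count_cat; rewrite /= in Hlt; rewrite /rq in Hlt; lia.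
Qed.

Lemma split_redex (T : eqType) (c : T) mu : c \notin mu -> forall w1 w2 p s, p ++ mu ++ s = w1 ++ c :: w2 ->
  (exists p', p = w1 ++ c :: p' /\ w2 = p' ++ mu ++ s) \/ (exists s', s = s' ++ c :: w2 /\ w1 = p ++ mu ++ s').
Proof.
move=> Hc.
have pnil : forall w1 w2 s, mu ++ s = w1 ++ c :: w2 -> exists s', s = s' ++ c :: w2 /\ w1 = mu ++ s'.
  elim: mu Hc => [|m mu IH] Hc w1 w2 s /=.
    by move=> ->; exists w1.
  case: w1 => [|y w1] /= [E1 E2].
    by move: Hc; rewrite E1 in_cons eqxx.
  move: Hc; rewrite in_cons negb_or => /andP [_ Hc].
  have [s' [h1 h2]] := IH Hc _ _ _ E2; exists s'; by rewrite h2 E1.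
move=> w1 w2 p; elim: p w1 => [|x p IH] w1 s /=.
  by move=> /pnil H; right.
case: w1 => [|y w1] /= [E1 E2].
  by left; exists p; rewrite E1 E2.
case: (IH _ _ E2) => [[p' [h1 h2]]|[s' [h1 h2]]].
  by left; exists p'; rewrite E1 h1 h2.
by right; exists s'; rewrite E1 h1 h2.
Qed.

Lemma notin_mapA c u : ~~ isA c -> c \notin map cA u.
Proof. move=> Hc; apply/mapP => -[a _ E]; by rewrite E in Hc. Qed.

Lemma commute a b c : Ds a b -> Rs b c -> exists a', Rs a a' /\ Ds a' c.
Proof.
move=> [w1 [w2 [c0 [d [Hc [Hd [Hr Hab]]]]]]] [p [s [u [v [Huv [Eb ->]]]]]].
have Eb' : p ++ map cA u ++ s = w1 ++ c0 :: w2.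
  by case: Hab => -[_ <-].
case: (split_redex (notin_mapA u Hc) Eb') => [[p' [h1 h2]]|[s' [h1 h2]]]; subst.
- case: Hab => -[-> _].
  + exists (w1 ++ c0 :: d ++ p' ++ map cA v ++ s); split.
      by exists (w1 ++ c0 :: d ++ p'), s, u, v; rewrite -?catA /= -?catA.
    exists w1, (p' ++ map cA v ++ s), c0, d; do 3 split => //; left; split => //.
    by rewrite -?catA /= -?catA.
  + exists (w1 ++ d ++ c0 :: p' ++ map cA v ++ s); split.
      by exists (w1 ++ d ++ c0 :: p'), s, u, v; rewrite -?catA /= -?catA.
    exists w1, (p' ++ map cA v ++ s), c0, d; do 3 split => //; right; split => //.
    by rewrite -?catA /= -?catA.
- case: Hab => -[-> _].
  + exists (p ++ map cA v ++ s' ++ c0 :: d ++ w2); split.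
      by exists p, (s' ++ c0 :: d ++ w2), u, v; rewrite -!catA.
    exists (p ++ map cA v ++ s'), w2, c0, d; do 3 split => //; left; split; by rewrite -?catA /= -?catA.
  + exists (p ++ map cA v ++ s' ++ d ++ c0 :: w2); split.
      by exists p, (s' ++ d ++ c0 :: w2), u, v; rewrite -!catA.
    exists (p ++ map cA v ++ s'), w2, c0, d; do 3 split => //; right; split; by rewrite -?catA /= -?catA.
Qed.

Lemma cA_inj : injective cA. Proof. by move=> a b []. Qed.

Lemma map_cat_inv (u : seq A) x y : map cA u = x ++ y ->
  exists x0 y0, u = x0 ++ y0 /\ x = map cA x0 /\ y = map cA y0.
Proof.
elim: x u => [|c x IH] u /=; first by move=> <-; exists [::], u.
case: u => // a u [E1 E2]; have [x0 [y0 [h1 [h2 h3]]]] := IH _ E2.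
by exists (a :: x0), y0; rewrite h1 h2 h3 -E1.
Qed.

Lemma AccR_A u : Acc (Rf (rstep RG)) u -> Acc (Rf Rs) (map cA u).
Proof.
elim=> {}u _ IH; constructor => b [w1 [w2 [u1 [v1 [Huv [E ->]]]]]].
have [x0 [y0 [Eu [Ex Ey]]]] := map_cat_inv E.
have [x1 [y1 [Ey0 [Ex1 Ey1]]]] := map_cat_inv (esym Ey).
have Ex1' : x1 = u1 by apply: (inj_map cA_inj).
subst.
have -> : map cA x0 ++ map cA v1 ++ map cA y1 = map cA (x0 ++ v1 ++ y1) by rewrite !map_cat.
apply: IH; by exists x0, y1, u1, v1.
Qed.

Lemma allA_map x : all isA x -> exists u, x = map cA u.
Proof.
elim: x => [|c x IH] /=; first by exists [::].
case: c => // a /IH [u ->]; by exists (a :: u).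
Qed.

Lemma split_first w : ~~ all isA w -> exists x c rest, w = x ++ c :: rest /\ all isA x /\ ~~ isA c.
Proof.
elim: w => [|c w IH] //=; case Hc: (isA c) => /=.
  move=> /IH [x [c' [rest [-> [h1 h2]]]]]; exists (c :: x), c', rest; by rewrite /= Hc.
by move=> _; exists [::], c, w; rewrite Hc.
Qed.

Lemma AccR_cons c : ~~ isA c -> forall x, Acc (Rf Rs) x -> all isA x ->
  forall rest, Acc (Rf Rs) rest -> Acc (Rf Rs) (x ++ c :: rest).
Proof.
move=> Hc x; elim=> {}x _ IHx Hx rest; elim=> {}rest Hrest IHr.
constructor => b [p [s [u [v [Huv [Eb ->]]]]]].
case: (split_redex (notin_mapA u Hc) (esym Eb)) => [[p' [h1 h2]]|[s' [h1 h2]]]; subst.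
- rewrite -?catA /=; apply: IHr; exists p', s, u, v; by split.
- have -> : p ++ map cA v ++ s' ++ c :: rest = (p ++ map cA v ++ s') ++ c :: rest by rewrite -?catA.
  apply: IHx.
  + by exists p, s', u, v.
  + move: Hx; rewrite !all_cat => /and3P [-> _ ->]; rewrite andbT /=.
    by apply/allP => y /mapP [a _ ->].
  + by constructor.
Qed.

Lemma AccR w : Acc (Rf Rs) w.
Proof.
suff H : forall n w, size w <= n -> Acc (Rf Rs) w by exact: (H _ w (leqnn _)).
elim=> [|n IH] w0 Hs; case Ha: (all isA w0).
- have [u ->] := allA_map Ha; apply: AccR_A; exact: AccG.
- by case: w0 Hs Ha.
- have [u ->] := allA_map Ha; apply: AccR_A; exact: AccG.
have [x [c [rest [E [Hx Hc]]]]] := split_first (negbT Ha); subst w0.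
have [u Hu] := allA_map Hx.
have H1 : Acc (Rf Rs) x by rewrite Hu; apply: AccR_A; exact: AccG.
apply: (AccR_cons Hc H1 Hx).
apply: IH; move: Hs; rewrite size_cat /= addnS ltnS; exact: leq_trans (leq_addl _ _).
Qed.

Definition Dstar := clos_refl_trans _ Ds.

Lemma Ds_rq a b : Ds a b -> rq b = rq a /\ size b < size a.
Proof.
move=> [w1 [w2 [c [d [_ [Hd [Hr [[-> ->]|[-> ->]]]]]]]]].
- split; first by rewrite /rq ?count_cat /= ?count_cat Hr add0n.
  move: Hd; rewrite -size_eq0 -lt0n => H.
  rewrite !size_cat /= size_cat ltn_add2l ltnS -[X in X < _]add0n ltn_add2r; exact: H.
- split; first by rewrite /rq ?count_cat /= ?count_cat Hr add0n.
  move: Hd; rewrite -size_eq0 -lt0n => H.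
  rewrite !size_cat /= ltn_add2l -[X in X < _]add0n ltn_add2r; exact: H.
Qed.

Lemma Dstar_rq a b : Dstar a b -> rq b = rq a.
Proof.
elim=> // [a0 b0 /Ds_rq [] //|a0 b0 c0 _ h1 _ h2]; by rewrite h2 h1.
Qed.

Lemma Rs_rq a b : Rs a b -> rq b = rq a.
Proof. move=> [w1 [w2 [u [v [_ [-> ->]]]]]]; by rewrite /rq !count_cat -!/(rq _) !rq_mapA. Qed.

Lemma Dstar_commute s t t' : Dstar s t -> Rs t t' -> exists s', Rs s s' /\ Dstar s' t'.
Proof.
move=> /clos_rt_rtn1_iff H; elim: H t' => [|y t0 Hy _ IH] t' Ht.
  by exists t'; split => //; exact: rt_refl.
have [y' [h1 h2]] := commute Hy Ht.
have [s' [h3 h4]] := IH _ h1.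
exists s'; split => //; apply: rt_trans h4 _; exact: rt_step.
Qed.

Lemma AccX w : Acc (Rf (rstep RX)) w.
Proof.
have main : forall k, (forall w, rq w < k -> Acc (Rf (rstep RX)) w) -> forall w, rq w = k -> Acc (Rf (rstep RX)) w.
  move=> k IHk w0 Hw0.
  have : forall s, Acc (Rf Rs) s -> rq s = k -> forall n t, size t <= n -> Dstar s t -> Acc (Rf (rstep RX)) t.
    move=> s; elim=> {}s _ IHs Hs n; elim: n => [|n IHn] t Hsz Hst;
      constructor => t' Hstep; case: (classify Hstep) => [HR|[HD|Hlt]].
    - have [s' [h1 h2]] := Dstar_commute Hst HR.
      apply: (IHs s' h1 _ (size t') t' (leqnn _) h2); by rewrite (Rs_rq h1).
    - have [_ h] := Ds_rq HD; by move: Hsz h; rewrite leqn0 => /eqP ->.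
    - apply: IHk; by rewrite -Hs -(Dstar_rq Hst).
    - have [s' [h1 h2]] := Dstar_commute Hst HR.
      apply: (IHs s' h1 _ (size t') t' (leqnn _) h2); by rewrite (Rs_rq h1).
    - have [_ h] := Ds_rq HD; apply: IHn.
        by rewrite -ltnS; exact: leq_trans h Hsz.
      apply: rt_trans Hst _; exact: rt_step.
    - apply: IHk; by rewrite -Hs -(Dstar_rq Hst).
  move=> H; apply: (H w0 (AccR w0) Hw0 (size w0) w0 (leqnn _)); exact: rt_refl.
have : forall k w, rq w < k -> Acc (Rf (rstep RX)) w.
  elim=> [|k IH] w0; first by rewrite ltn0.
  rewrite ltnS leq_eqVlt => /orP [/eqP E|Hlt].
    exact: (main k IH).
  exact: IH.
move=> H; apply: (H (rq w).+1); exact: ltnSn.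
Qed.

Lemma noethX : noetherian RX.
Proof. exact: (acc_noeth AccX). Qed.

Definition optR (oi : option I) : seq X := if oi is Some i then [:: cR i] else [::].
Definition optQ (ol : option L) : seq X := if ol is Some l then [:: cQ l] else [::].
Definition NF (w : seq X) := w = [:: cZ] \/ exists oi u ol, w = optR oi ++ map cA u ++ optQ ol /\
  (u = [::] -> oi <> None \/ ol <> None) /\ (oi <> None \/ ol <> None -> u <> we) /\ irrG u.
Definition irrX (w : seq X) := forall w', ~ rstep RX w w'.
Definition adj_ok (x y : X) := ~~ isR y && ~~ isQ x && ~~ isZ x && ~~ isZ y.

Lemma mem_enumT (T : finType) (t : T) : t \in enum T.
Proof. by rewrite mem_enum. Qed.

Lemma in_RX_Zl x : ([:: cZ; x], [:: cZ]) \in RX.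
Proof. have H : ([:: cZ; x], [:: cZ]) \in Zl := map_f _ (mem_enumT x). by rewrite /RX !mem_cat H !orbT. Qed.
Lemma in_RX_Zr x : ([:: x; cZ], [:: cZ]) \in RX.
Proof. have H : ([:: x; cZ], [:: cZ]) \in Zr := map_f _ (mem_enumT x). by rewrite /RX !mem_cat H !orbT. Qed.
Lemma in_RX_4r i : (cR i :: map cA we, [:: cR i]) \in RX.
Proof. have H : (cR i :: map cA we, [:: cR i]) \in R4r := map_f _ (mem_enumT i). by rewrite /RX !mem_cat H !orbT. Qed.
Lemma in_RX_4q l : (map cA we ++ [:: cQ l], [:: cQ l]) \in RX.
Proof. have H : (map cA we ++ [:: cQ l], [:: cQ l]) \in R4q := map_f _ (mem_enumT l). by rewrite /RX !mem_cat H !orbT. Qed.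
Lemma in_RX_5 a i : exists v, ([:: cA a; cR i], v) \in RX.
Proof.
have H : ([:: cA a; cR i], cA a :: ew (e ⋆ r0 i)) \in R5 := map_f (fun p : A * I => ([:: cA p.1; cR p.2], cA p.1 :: ew (e ⋆ r0 p.2))) (mem_enumT (a, i)).
by exists (cA a :: ew (e ⋆ r0 i)); rewrite /RX !mem_cat H !orbT.
Qed.
Lemma in_RX_6 j i : exists v, ([:: cR j; cR i], v) \in RX.
Proof.
have H : ([:: cR j; cR i], cR j :: ew (e ⋆ r0 i)) \in R6 := map_f (fun p : I * I => ([:: cR p.1; cR p.2], cR p.1 :: ew (e ⋆ r0 p.2))) (mem_enumT (j, i)).
by exists (cR j :: ew (e ⋆ r0 i)); rewrite /RX !mem_cat H !orbT.
Qed.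
Lemma in_RX_7 l i : exists v, ([:: cQ l; cR i], v) \in RX.
Proof.
have H : ([:: cQ l; cR i], ew (q0 l ⋆ r0 i)) \in R7 := map_f (fun p : L * I => ([:: cQ p.1; cR p.2], ew (q0 p.1 ⋆ r0 p.2))) (mem_enumT (l, i)).
by exists (ew (q0 l ⋆ r0 i)); rewrite /RX !mem_cat H !orbT.
Qed.
Lemma in_RX_8 l a : exists v, ([:: cQ l; cA a], v) \in RX.
Proof.
have H : ([:: cQ l; cA a], ew (q0 l ⋆ e) ++ [:: cA a]) \in R8 := map_f (fun p : L * A => ([:: cQ p.1; cA p.2], ew (q0 p.1 ⋆ e) ++ [:: cA p.2])) (mem_enumT (l, a)).
by exists (ew (q0 l ⋆ e) ++ [:: cA a]); rewrite /RX !mem_cat H !orbT.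
Qed.
Lemma in_RX_9 l m : exists v, ([:: cQ l; cQ m], v) \in RX.
Proof.
have H : ([:: cQ l; cQ m], ew (q0 l ⋆ e) ++ [:: cQ m]) \in R9 := map_f (fun p : L * L => ([:: cQ p.1; cQ p.2], ew (q0 p.1 ⋆ e) ++ [:: cQ p.2])) (mem_enumT (l, m)).
by exists (ew (q0 l ⋆ e) ++ [:: cQ m]); rewrite /RX !mem_cat H !orbT.
Qed.

Lemma adj_redex x y : ~~ adj_ok x y -> exists v, ([:: x; y], v) \in RX.
Proof.
case: x => [a|[i|[l|[]]]]; case: y => [b|[j|[m|[]]]] //= _;
  first [ exact: in_RX_5 | exact: in_RX_6 | exact: in_RX_7 | exact: in_RX_8 | exact: in_RX_9
        | (exists [:: cZ]; exact: in_RX_Zl) | (exists [:: cZ]; exact: in_RX_Zr)].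
Qed.

Lemma irr_adj w : irrX w -> forall w1 w2 x y, w = w1 ++ x :: y :: w2 -> adj_ok x y.
Proof.
move=> Iw w1 w2 x y E; case H: (adj_ok x y) => //.
have [v Hv] := adj_redex (negbT H).
case: (Iw (w1 ++ v ++ w2)); exists w1, w2, [:: x; y], v; split => //; by rewrite E.
Qed.

Lemma adj_sorted w : (forall w1 w2 x y, w = w1 ++ x :: y :: w2 -> adj_ok x y) -> sorted adj_ok w.
Proof.
case: w => //= c w; elim: w c => //= y w IH c H; apply/andP; split.
  exact: (H [::] w).
apply: IH => w1 w2 x y' E; apply: (H (c :: w1) w2); by rewrite E.
Qed.

Lemma adjP x y : adj_ok x y -> [/\ ~~ isR y, ~~ isQ x, ~~ isZ x & ~~ isZ y].
Proof. by move=> /andP [/andP [/andP [h1 h2] h3] h4]. Qed.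

Lemma tail_shape c rest : path adj_ok c rest -> rest <> [::] -> exists u ol, rest = map cA u ++ optQ ol.
Proof.
elim: rest c => //= y rest IH c /andP [Hcy Hp] _.
have [Ry _ _ Zy] := adjP Hcy.
case: rest IH Hp => [|y' rest'] IH Hp.
  case: y Ry Zy {Hcy IH Hp} => [a|[i|[l|[]]]] //= _ _.
    by exists [:: a], None.
  by exists [::], (Some l).
have [u [ol E]] := IH y Hp ltac:(done).
have /andP [Hyy' _] := Hp.
have [_ Qy Zy' _] := adjP Hyy'.
case: y Ry Qy Zy' {Hcy Zy Hyy' IH Hp} E => [a|[i|[l|[]]]] //= _ _ _ E.
by exists (a :: u), ol; rewrite E.
Qed.

Lemma shape w : sorted adj_ok w -> w <> [::] -> w = [:: cZ] \/ exists oi u ol, w = optR oi ++ map cA u ++ optQ ol.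
Proof.
case: w => // c rest /= Hp _; case: rest Hp => [|y rest] Hp.
  case: c {Hp} => [a|[i|[l|[]]]].
  - by right; exists None, [:: a], None.
  - by right; exists (Some i), [::], None.
  - by right; exists None, [::], (Some l).
  - by left.
have [u [ol E]] := tail_shape Hp ltac:(done).
have /andP [Hcy _] := Hp.
have [_ Qc Zc _] := adjP Hcy.
case: c Qc Zc {Hcy Hp} => [a|[i|[l|[]]]] //= _ _.
  by right; exists None, (a :: u), ol; rewrite /= E.
by right; exists (Some i), u, ol; rewrite /= E.
Qed.

Lemma irr_NF w : w <> [::] -> irrX w -> NF w.
Proof.
move=> wn Iw; have Hs := adj_sorted (irr_adj Iw).
case: (shape Hs wn) => [->|[oi [u [ol E]]]]; [by left|right].
exists oi, u, ol; split => //; split.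
  move=> Eu; apply: NNPP => H; apply: wn; rewrite E Eu.
  case: oi {E Iw Hs} H => [i|] H; first by case: H; left.
  case: ol H => [l|] H; first by case: H; right.
  done.
split.
  move=> Hp Eu; subst u; case: oi E Hp => [i|] E Hp.
    apply: (Iw ([:: cR i] ++ optQ ol)); exists [::], (optQ ol), (cR i :: map cA we), [:: cR i].
    by split; [exact: in_RX_4r | rewrite E].
  case: ol E Hp => [l|] E Hp; last by case: Hp.
  apply: (Iw [:: cQ l]); exists [::], [::], (map cA we ++ [:: cQ l]), [:: cQ l].
  by split; [exact: in_RX_4q | rewrite E /= cats0].
move=> u' [p [s [x [y [Hxy [Eu Eu']]]]]].
apply: (Iw (optR oi ++ map cA (p ++ y ++ s) ++ optQ ol)).
exists (optR oi ++ map cA p), (map cA s ++ optQ ol), (map cA x), (map cA y).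
have H : (map cA x, map cA y) \in RGl := map_f (fun p : seq A * seq A => (map cA p.1, map cA p.2)) Hxy.
split; first by rewrite /RX mem_cat H.
by split; rewrite ?E ?Eu !map_cat -?catA.
Qed.

Lemma evX_opt oi ol W s : evX W = Some s -> e ⋆ s = s -> s ⋆ e = s ->
  evX (optR oi ++ W ++ optQ ol) = Some (rw oi ⋆ s ⋆ qw ol).
Proof.
move=> HW es se.
have HV : evX (W ++ optQ ol) = Some (s ⋆ qw ol).
  case: ol => [l|] /=; first exact: evX_rcons.
  by rewrite cats0 HW se.
case: oi => [i|].
  rewrite -Hassoc; exact: (evX_cons (cR i) HV).
rewrite /= es; exact: HV.
Qed.

Lemma evX_opt_nil oi ol : oi <> None \/ ol <> None -> evX (optR oi ++ optQ ol) = Some (rw oi ⋆ e ⋆ qw ol).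
Proof.
case: oi => [i|]; case: ol => [l|] /= H.
- by rewrite rI.
- by rewrite !rI.
- by rewrite ee qI.
- by case: H.
Qed.

Lemma form_val oi u ol : (u = [::] -> oi <> None \/ ol <> None) ->
  exists g, Gw g /\ evX (optR oi ++ map cA u ++ optQ ol) = Some (rw oi ⋆ g ⋆ qw ol) /\
    (u = [::] -> g = e) /\ (u <> [::] -> evA u = Some g).
Proof.
case: u => [|x w] H.
  exists e; split; first exact: Ge; split; last by [].
  exact: evX_opt_nil (H erefl).
have Hg := dG1 x w.
exists (eval_word mul fA x w); split => //; split => //.
apply: evX_opt; [by rewrite evX_map | exact: G_eSe_l | exact: G_eSe_r].
Qed.

Lemma NF_uniq n1 n2 : NF n1 -> NF n2 -> evX n1 = evX n2 -> n1 = n2.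
Proof.
have [we1 [we2 we3]] := we_spec.
case=> [->|[oi [u [ol [E1 [C1 [D1 I1]]]]]]]; case=> [->|[oj [u' [om [E2 [C2 [D2 I2]]]]]]] //.
- have [g [Gg [Hv _]]] := form_val C2; rewrite E2 Hv /= => -[E].
  by case: (@Hnonzero oj g om Gg); rewrite -E.
- have [g [Gg [Hv _]]] := form_val C1; rewrite E1 Hv /= => -[E].
  by case: (@Hnonzero oi g ol Gg); rewrite E.
have [g [Gg [Hv [Hg1 Hg2]]]] := form_val C1.
have [h [Gh [Hv' [Hh1 Hh2]]]] := form_val C2.
rewrite E1 E2 Hv Hv' => -[/(Huniq Gg Gh) [Eij [Egh Elm]]]; subst oj om h.
congr (_ ++ _ ++ _).
case: (classic (u = [::])) => Hu; case: (classic (u' = [::])) => Hu'.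
- by rewrite Hu Hu'.
- have Ee : evA u' = Some e by rewrite Hh2 // Hg1.
  have Eu' : u' = we by apply: uniq_irr => //; rewrite Ee we3.
  by case: (D2 (C1 Hu)).
- have Ee : evA u = Some e by rewrite Hg2 // Hh1.
  have Eu : u = we by apply: uniq_irr => //; rewrite Ee we3.
  by case: (D1 (C2 Hu')).
- congr map; apply: uniq_irr => //; by rewrite Hg2 // Hh2.
Qed.

Lemma nf_of w : w <> [::] -> exists n, rsteps RX w n /\ NF n /\ evX n = evX w.
Proof.
move=> wn; have [n [Hn In]] := acc_nf (AccX w).
have Ev := rtX_ev Hn.
exists n; split => //; split => //.
apply: irr_NF => // En; rewrite En in Ev; apply: wn; apply/(evalo_nil mul fX); exact: Ev.
Qed.

Lemma confX : confluent RX.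
Proof.
move=> u v v' H1 H2.
case: (classic (u = [::])) => Hu.
  have Ev := rtX_ev H1; have Ev' := rtX_ev H2; rewrite Hu in Ev Ev'.
  have -> : v = [::] by apply/(evalo_nil mul fX); exact: (esym Ev).
  have -> : v' = [::] by apply/(evalo_nil mul fX); exact: (esym Ev').
  by exists [::]; split; exact: rt_refl.
have Ev := rtX_ev H1; have Ev' := rtX_ev H2.
have vn : v <> [::] by move=> E; rewrite E in Ev; apply: Hu; apply/(evalo_nil mul fX); exact: Ev.
have vn' : v' <> [::] by move=> E; rewrite E in Ev'; apply: Hu; apply/(evalo_nil mul fX); exact: Ev'.
have [n [Hn [Nn En]]] := nf_of vn; have [n' [Hn' [Nn' En']]] := nf_of vn'.
have Enn : n = n' by apply: NF_uniq => //; rewrite En En' -Ev -Ev'.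
subst n'; by exists n.
Qed.

Lemma fcrsX : fcrs_defined mul full_set.
Proof.
exists X, RX; split; first exact: RX_ok.
split; first by split; [exact: noethX | exact: confX].
exists fX; split => //; split.
  move=> s _; case: (classic (s = z)) => [->|sz]; first by exists cZ, [::].
  have [oi [g [ol [Gg Es]]]] := Hdecomp sz.
  have [w1 [_ w3]] := wd_spec Gg.
  have Hv := evX_opt oi ol (W := map cA (wd g)) (s := g).
  rewrite evX_map in Hv; have := Hv w3 (G_eSe_l Gg) (G_eSe_r Gg).
  case: (optR oi ++ map cA (wd g) ++ optQ ol) => [|x w] //= [E].
  by exists x, w; rewrite E Es.
move=> x w y w'; split => H.
  have [n [Hn [Nn En]]] := nf_of (w := x :: w) ltac:(done).
  have [n' [Hn' [Nn' En']]] := nf_of (w := y :: w') ltac:(done).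
  have Enn : n = n' by apply: NF_uniq => //; rewrite En En' /= H.
  subst n'; apply: rst_trans (rt_rst Hn) (rst_sym _ _ _ _ (rt_rst Hn')).
have := rcongX_ev H; by case.
Qed.
End RW.

End M4.
Import M4.

Theorem theorem1p3 (S : Type) (mul : S -> S -> S) (z : S)
  (Hassoc : associative_op mul) (Hzero : is_zero mul z)
  (HS : completely_zero_simple mul z)
  (HL : finitely_many_left_ideals mul) (HR : finitely_many_right_ideals mul)
  (HG : forall H, is_maximal_subgroup mul H -> fcrs_defined mul H) :
  fcrs_defined mul full_set.
Proof.
case: HL => Ls HLs; case: HR => Rs HRs.
have [A [RG [okG [cG [fA [d1 [d2 d3]]]]]]] := HG _ (G_maximal Hassoc Hzero HS).
apply: (@fcrsX S mul z Hassoc Hzero (e mul z) (ee Hassoc Hzero HS) (ez Hassoc Hzero HS)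
          (II mul z Rs) (LL mul z Ls) (@rr S mul z Rs) (@qq S mul z Ls)).
- move=> i; exact: (r'I Hassoc Hzero HS (Some i)).
- move=> l; exact: (q'I Hassoc Hzero HS (Some l)).
- move=> s sz; exact: (decomp Hassoc Hzero HS HLs HRs sz).
- move=> oi g ol Gg; exact: (nonzero Hassoc Hzero HS Gg).
- move=> oi g ol oj h om Gg Gh E; exact: (uniq_dec Hassoc Hzero HS Gg Gh E).
- exact: okG.
- exact: cG.
- exact: d1.
- exact: d2.
- exact: d3.
Qed.
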